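(* Let $\mathbb{F}_q$ be the finite field with $q$ elements and let $f(T)=T^2+aT+b\in\mathbb{F}_q[T]$ be irreducible. Then for every $\gamma\in\mathbb{F}_q^{*}$, the cyclotomic function field $F(\Lambda_M)$ with modulus $M=f$ is $\mathbb{F}_q$-isomorphic to the function field $\mathbb{F}_q(v,y)$ defined over $\mathbb{F}_q$ by $$y^{q-1}=-\frac{\gamma v^2+av+(b/\gamma)}{v^q-v}.$$
   Context: Let $x$ be transcendental over $\mathbb{F}_q$, $R=\mathbb{F}_q[x]$, $F=\mathbb{F}_q(x)$, and $\overline{F}$ a fixed algebraic closure of $F$. Make $\overline{F}$ an $R$-module via $z^{g(x)}=g(\varphi)(z)$ for $g\in R$, where $\varphi\in\operatorname{End}_{\mathbb{F}_q}(\overline{F})$ is $\varphi(z)=z^q+xz$ (so $z^{\sum a_ix^i}=\sum a_i\varphi^i(z)$). For nonzero $M\in R$, $\Lambda_M=\{z\in\overline{F}: z^M=0\}$, and the cyclotomic function field with modulus $M$ is $F(\Lambda_M)$, the subfield of $\overline{F}$ generated over $F$ by $\Lambda_M$ (here $M$ is viewed as a polynomial in $x$). *)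

(* Defs.v *)
From HB Require Import structures.
From mathcomp Require Import all_boot all_order all_algebra all_field.
Set Implicit Arguments. Unset Strict Implicit. Unset Printing Implicit Defensive.
Import GRing.Theory.
Local Open Scope ring_scope.

Section CarlitzDefs.
Variables (k : finFieldType) (L : fieldType) (kappa : {rmorphism k -> L}).

Definition transcendental_over (x : L) : Prop :=
  forall p : {poly k}, p != 0 -> (map_poly kappa p).[x] != 0.

Definition carlitz_phi (x z : L) : L := z ^+ #|k| + x * z.

Definition carlitz_act (x : L) (g : {poly k}) (z : L) : L :=
  \sum_(i < size g) kappa g`_i * iter i (carlitz_phi x) z.

Definition carlitz_torsion (x : L) (M : {poly k}) (z : L) : Prop :=
  carlitz_act x M z = 0.

Definition subfield_closed (S : L -> Prop) : Prop :=
  [/\ S 1, (forall u w, S u -> S w -> S (u - w)),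
      (forall u w, S u -> S w -> S (u * w)) & (forall u, S u -> S u^-1)].

Definition gen_field (A : L -> Prop) : L -> Prop :=
  fun z => forall S, subfield_closed S -> (forall u, A u -> S u) -> S z.

Definition const_field (z : L) : Prop := exists c : k, z = kappa c.

Definition cyclotomic_ff (x : L) (M : {poly k}) : L -> Prop :=
  gen_field (fun z => [\/ const_field z, z = x | carlitz_torsion x M z]).

(* evaluation of a bivariate polynomial P(V,Y) in {poly {poly k}}
   (outer variable Y, inner variable V) at V = v, Y = y *)
Definition eval2 (v y : L) (P : {poly {poly k}}) : L :=
  (map_poly (fun c : {poly k} => (map_poly kappa c).[v]) P).[y].

End CarlitzDefs.

(* G(V,Y) = Y^(q-1) (V^q - V) + (gamma V^2 + a V + b/gamma),
   the cleared form of y^(q-1) = -(gamma v^2 + a v + b/gamma)/(v^q - v). *)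
Definition defining_poly (k : finFieldType) (a b gamma : k) : {poly {poly k}} :=
  'X^(#|k|.-1) * (('X^#|k| - 'X) : {poly k})%:P
  + (gamma *: 'X^2 + a *: 'X + (b / gamma)%:P : {poly k})%:P.

(* Main.v *)
Require Import Defs.
From HB Require Import structures.
From mathcomp Require Import all_boot all_order all_algebra all_field all_fingroup all_solvable.
From mathcomp Require Import ring zify.
Set Implicit Arguments. Unset Strict Implicit. Unset Printing Implicit Defensive.
Import GRing.Theory.
Local Open Scope ring_scope.

Lemma coef_compCX (A : comNzRingType) (P : {poly A}) (C : A) j :
  (P \Po (C%:P * 'X))`_j = C ^+ j * P`_j.
Proof.
elim/poly_ind: P j => [|P c IH] j; first by rewrite comp_poly0 !coef0 mulr0.
rewrite comp_poly_MXaddC mulrA !coefD !coefMX !coefC.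
case: j => [|j] /=; first by rewrite expr0 mul1r.
by rewrite coefMC IH exprS !addr0; ring.
Qed.

Lemma ident_aux (A : comNzRingType) (D X1 X2 p lo hi : A) :
  p * (D * X1 * lo - hi) = D * X1 * (p * lo + hi * X2) - (X1 * X2 * D + p) * hi.
Proof. ring. Qed.

Section Main.
Variables (k : finFieldType) (L : closedFieldType) (kappa : {rmorphism k -> L}) (x : L).
Hypothesis hx : transcendental_over kappa x.
Variables (a b : k).
Hypothesis hf : irreducible_poly ('X^2 + a *: 'X + b%:P : {poly k}).
Variable gamma : k.
Hypothesis hgamma : gamma != 0.

Local Notation q := #|k|.
Local Notation M := ('X^2 + a *: 'X + b%:P : {poly k}).

Lemma q_gt1 : (1 < q)%N. Proof. exact: finNzRing_gt1. Qed.

Lemma frob_nat : [pchar L].-nat q.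
Proof.
have [p pp pk] := finPcharP k.
have pL : p \in [pchar L] by rewrite (rmorph_pchar kappa).
have := abelem_pgroup (fin_ring_pchar_abelem pk).
rewrite /pgroup cardsT => H.
apply: sub_in_pnat H => r _; rewrite inE => /eqP ->; exact: pL.
Qed.

Lemma frobD (z w : L) : (z + w) ^+ q = z ^+ q + w ^+ q.
Proof. exact: exprDn_pchar frob_nat. Qed.

Lemma frobN (z : L) : (- z) ^+ q = - z ^+ q.
Proof.
have h : (- 1 : L) ^+ q = -1 by rewrite -(rmorphN1 kappa) -rmorphXn expf_card.
by rewrite -mulN1r exprMn h mulN1r.
Qed.

Lemma kappaq (c : k) : kappa c ^+ q = kappa c.
Proof. by rewrite -rmorphXn expf_card. Qed.

Lemma sizeM : size M = 3%N.
Proof.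
rewrite -addrA size_polyDl size_polyXn //.
apply: (leq_ltn_trans (size_polyD _ _)); rewrite gtn_max.
rewrite (leq_ltn_trans (size_scale_leq _ _)) ?size_polyX //.
by rewrite (leq_ltn_trans (size_polyC_leq1 _)).
Qed.

Lemma M_noroot (c : k) : c ^+ 2 + a * c + b != 0.
Proof.
apply/negP => /eqP h.
have hr : root M c by rewrite /root !hornerE h.
have hd : ('X - c%:P) %| M by rewrite dvdp_XsubCl.
case: (irredp_XsubCP hf hd) => /eqp_size; rewrite size_XsubC ?sizeM //.
by rewrite size_poly1.
Qed.

Definition Mx := x ^+ 2 + kappa a * x + kappa b.

Lemma Mx_neq0 : Mx != 0.
Proof.
have := hx (irredp_neq0 hf).
by rewrite !rmorphD /= map_polyXn map_polyZ map_polyX map_polyC /= !hornerE.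
Qed.

Definition phi (z : L) := z ^+ q + x * z.
Definition Ff (z : L) := phi (phi z) + kappa a * phi z + kappa b * z.
Definition Aco := x ^+ q + x + kappa a.

Lemma act_M z : carlitz_act kappa x M z = Ff z.
Proof.
rewrite /carlitz_act sizeM !big_ord_recl big_ord0 /=.
rewrite !coefD !coefXn !coefZ !coefX !coefC /=.
rewrite /Ff /phi /carlitz_phi /bump /=.
rewrite !mulr0 !mulr1 !add0r !addr0 !rmorph1 /= mul1r addrC; congr (_ + _); exact: addrC.
Qed.

Lemma phiD z w : phi (z + w) = phi z + phi w.
Proof. rewrite /phi frobD; ring. Qed.

Lemma phiZ (c : k) z : phi (kappa c * z) = kappa c * phi z.
Proof. rewrite /phi exprMn kappaq; ring. Qed.

Lemma FfD z w : Ff (z + w) = Ff z + Ff w.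
Proof. rewrite /Ff !phiD; ring. Qed.

Lemma FfZ (c : k) z : Ff (kappa c * z) = kappa c * Ff z.
Proof. rewrite /Ff !phiZ; ring. Qed.

Lemma Ff_phi z : Ff (phi z) = phi (Ff z).
Proof. rewrite /Ff (phiD (phi (phi z) + kappa a * phi z)) (phiD (phi (phi z))) (phiZ a (phi z)) (phiZ b z). ring. Qed.

Lemma phi0 : phi 0 = 0.
Proof. by rewrite /phi expr0n /= (gtn_eqF (ltnW q_gt1)) mulr0 addr0. Qed.

Lemma FfE z : Ff z = z ^+ (q * q) + Aco * z ^+ q + Mx * z.
Proof.
rewrite /Ff /phi /Aco /Mx frobD exprMn exprM.
ring.
Qed.


Lemma q_facts : [/\ (q = (q - 1).+1)%N, (q * q = (q * q - 1).+1)%N,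
   ((q - 1) * (q + 1) = q * q - 1)%N, (q < q * q)%N & (0 < q - 1)%N].
Proof. have := q_gt1; split; nia. Qed.

Lemma exists_lam : exists lam : L,
  lam != 0 /\ lam ^+ (q * q - 1) + Aco * lam ^+ (q - 1) + Mx = 0.
Proof.
have [e1 e2 e3 e4 e5] := q_facts.
pose Pl : {poly L} := 'X^(q * q - 1) + Aco%:P * 'X^(q - 1) + Mx%:P.
have hs : size Pl = (q * q - 1).+1.
  rewrite /Pl -addrA size_polyDl size_polyXn //.
  apply: (leq_ltn_trans (size_polyD _ _)); rewrite gtn_max.
  rewrite (leq_ltn_trans (size_polyC_leq1 _)) ?andbT; last by rewrite -e2; have := q_gt1; nia.
  by rewrite mul_polyC (leq_ltn_trans (size_scale_leq _ _)) // size_polyXn -e1 -e2.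
have : size Pl != 1%N by rewrite hs eqSS -lt0n subn_gt0 (ltn_trans q_gt1 e4).
case/closed_rootP => lam; rewrite /root /Pl !hornerD hornerCM !hornerXn !hornerC => /eqP h.
exists lam; split=> //; apply/negP => /eqP l0; move: h.
rewrite l0 !expr0n /=.
have -> : (q * q - 1 == 0)%N = false by apply/negP => /eqP; nia.
have -> : (q - 1 == 0)%N = false by apply/negP => /eqP; nia.
by rewrite mulr0 !add0r; apply/eqP; exact: Mx_neq0.
Qed.

Definition hv0 (v0 : L) : commr_rmorph kappa v0 := fun c => mulrC _ _.
Local Notation ev0 v0 := (horner_morph (hv0 v0)).
Definition hy0 v0 y0 : commr_rmorph (ev0 v0) y0 := fun c => mulrC _ _.
Local Notation E2 v0 y0 := (horner_morph (hy0 v0 y0)).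
Lemma eval2E v0 y0 P : eval2 kappa v0 y0 P = E2 v0 y0 P.
Proof. by []. Qed.

Section Gen.
Variable S : L -> Prop.
Hypothesis hS : Defs.subfield_closed S.
Lemma Ss1 : S 1. Proof. by case: hS. Qed.
Lemma SsB u1 u2 : S u1 -> S u2 -> S (u1 - u2). Proof. by case: hS => _ h _ _; apply: h. Qed.
Lemma SsM u1 u2 : S u1 -> S u2 -> S (u1 * u2). Proof. by case: hS => _ _ h _; apply: h. Qed.
Lemma SsV u1 : S u1 -> S u1^-1. Proof. by case: hS => _ _ _ h; apply: h. Qed.
Lemma Ss0 : S 0. Proof. by rewrite -(subrr 1); apply: SsB; apply: Ss1. Qed.
Lemma SsN u1 : S u1 -> S (- u1). Proof. by move=> h; rewrite -sub0r; apply: SsB => //; apply: Ss0. Qed.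
Lemma SsD u1 u2 : S u1 -> S u2 -> S (u1 + u2).
Proof. by move=> h1 h2; rewrite -[u2]opprK; apply: SsB => //; apply: SsN. Qed.
Lemma SsX u1 n : S u1 -> S (u1 ^+ n).
Proof. move=> h; elim: n => [|n IH]; first by rewrite expr0; apply: Ss1. by rewrite exprS; apply: SsM. Qed.
Lemma Ssdiv u1 u2 : S u1 -> S u2 -> S (u1 / u2).
Proof. by move=> h1 h2; apply: SsM => //; apply: SsV. Qed.
End Gen.

Lemma gen_closed (A : L -> Prop) : Defs.subfield_closed (gen_field A).
Proof.
split.
- by move=> S hS _; apply: Ss1.
- by move=> u1 u2 h1 h2 S hS hA; apply: SsB => //; [apply: h1 | apply: h2].
- by move=> u1 u2 h1 h2 S hS hA; apply: SsM => //; [apply: h1 | apply: h2].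
- by move=> u1 h1 S hS hA; apply: SsV => //; apply: h1.
Qed.

Lemma gen_in (A : L -> Prop) z : A z -> gen_field A z.
Proof. by move=> h S _ hA; apply: hA. Qed.

Lemma gen_sub (A B : L -> Prop) : (forall z, A z -> gen_field B z) ->
  forall z, gen_field A z -> gen_field B z.
Proof. by move=> h z hz; apply: hz => //; apply: gen_closed. Qed.

Section Lam.
Variable lam : L.
Hypothesis hlam0 : lam != 0.
Hypothesis hlam : lam ^+ (q * q - 1) + Aco * lam ^+ (q - 1) + Mx = 0.

Lemma Ff_lam : Ff lam = 0.
Proof.
have [e1 e2 e3 e4 e5] := q_facts.
have h1 : lam ^+ (q * q) = lam ^+ (q * q - 1) * lam by rewrite -exprSr -e2.
have h2 : lam ^+ q = lam ^+ (q - 1) * lam by rewrite -exprSr -e1.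
rewrite FfE h1 h2.
have -> : lam ^+ (q * q - 1) * lam + Aco * (lam ^+ (q - 1) * lam) + Mx * lam
  = (lam ^+ (q * q - 1) + Aco * lam ^+ (q - 1) + Mx) * lam by ring.
by rewrite hlam mul0r.
Qed.

Definition u := lam ^+ (q - 1).
Definition w := u + x.

Lemma key : u ^+ q * u + Aco * u + Mx = 0.
Proof.
have [e1 e2 e3 e4 e5] := q_facts.
rewrite -exprSr /u -exprM. have -> : ((q - 1) * q.+1 = q * q - 1)%N by rewrite -e3 addn1. exact: hlam.
Qed.

Lemma wid : x * (w ^+ q - w) = w ^+ q * w + kappa a * w + kappa b.
Proof.
apply/eqP; rewrite -subr_eq0; apply/eqP.
rewrite /w frobD.
have := key; rewrite /Aco /Mx => h.
rewrite -oppr0 -h; ring.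
Qed.


Lemma kg_neq0 : kappa gamma != 0. Proof. by rewrite fmorph_eq0. Qed.

Definition v := w / kappa gamma.

Lemma hu : u = w - x. Proof. by rewrite /w addrK. Qed.

Lemma z0 : (w ^+ q - w) * u + w ^+ 2 + kappa a * w + kappa b = 0.
Proof.
rewrite hu.
transitivity (w ^+ q * w + kappa a * w + kappa b - x * (w ^+ q - w)); first ring.
by rewrite wid subrr.
Qed.

Lemma Gvy : eval2 kappa v lam (defining_poly a b gamma) = 0.
Proof.
rewrite eval2E /defining_poly rmorphD rmorphM /= rmorphXn /= !horner_morphX.
rewrite !horner_morphC.
rewrite rmorphB ?rmorphXn /= -!mul_polyC !rmorphD !rmorphM /= ?rmorphXn /= !horner_morphX !horner_morphC ?fmorphV.
have hq : (q.-1 = q - 1)%N by rewrite subn1.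
rewrite hq -/u /v expr_div_n kappaq.
apply: (mulIf kg_neq0); rewrite mul0r -z0.
field; exact: kg_neq0.
Qed.


Lemma alg_exp z n : algebraicOver kappa z -> algebraicOver kappa (z ^+ n).
Proof.
move=> h; elim: n => [|n IH]; first by rewrite expr0; exact: algebraic1.
by rewrite exprS; exact: algebraic_mul.
Qed.

Lemma v_trans r : r != 0 -> (map_poly kappa r).[v] != 0.
Proof.
move=> r0; apply/negP => /eqP rv.
have av : algebraicOver kappa v by exists r => //; apply/eqP.
have aw : algebraicOver kappa w.
  have -> : w = v * kappa gamma by rewrite /v divfK // kg_neq0.
  by apply: algebraic_mul => //; apply: algebraic_id.
have nx : ~ algebraicOver kappa x by case=> p p0; apply/negP; exact: hx.
case: (eqVneq (w ^+ q) w) => hw.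
  have : root (map_poly kappa ('X^q - 'X)) w.
    by rewrite rmorphB /= map_polyXn map_polyX /root !hornerE hw subrr.
  rewrite finField_genPoly rmorph_prod /root horner_prod.
  case/prodf_eq0 => c _; rewrite rmorphB /= map_polyX map_polyC /= hornerXsubC subr_eq0 => /eqP wc.
  have h := wid; rewrite hw subrr mulr0 wc in h.
  have : kappa (c ^+ 2 + a * c + b) = 0 by rewrite !rmorphD rmorphM rmorphXn expr2 -h.
  by move/eqP; rewrite fmorph_eq0; apply/negP; exact: M_noroot.
apply: nx.
have -> : x = (w ^+ q * w + kappa a * w + kappa b) / (w ^+ q - w).
  by rewrite -wid mulfK // subr_eq0.
apply: algebraic_div; last by apply: algebraic_sub => //; apply: alg_exp.
apply: algebraic_add; last exact: algebraic_id.
apply: algebraic_add; last by apply: algebraic_mul => //; apply: algebraic_id.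
by apply: algebraic_mul => //; apply: alg_exp.
Qed.


Lemma lin0 c d : kappa c * lam + kappa d * phi lam = 0 -> c = 0 /\ d = 0.
Proof.
move=> h.
have [d0|dn0] := eqVneq d 0.
  move: h; rewrite d0 rmorph0 mul0r addr0 => /eqP; rewrite mulf_eq0 (negPf hlam0) orbF.
  by rewrite fmorph_eq0 => /eqP.
exfalso.
have kd : kappa d != 0 by rewrite fmorph_eq0.
have hp : phi lam = kappa (- c / d) * lam.
  rewrite fmorph_div rmorphN; apply: (mulfI kd).
  rewrite mulrA mulrCA divff // mulr1 -[RHS]addr0 -h; ring.
have := Ff_lam; rewrite /Ff hp phiZ hp.
have -> : kappa (- c / d) * (kappa (- c / d) * lam) + kappa a * (kappa (- c / d) * lam) +
   kappa b * lam = kappa ((- c / d) ^+ 2 + a * (- c / d) + b) * lam.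
  rewrite !rmorphD rmorphM rmorphXn; ring.
move/eqP; rewrite mulf_eq0 (negPf hlam0) orbF fmorph_eq0.
by apply/negP; exact: M_noroot.
Qed.

Definition lf (p : k * k) := kappa p.1 * lam + kappa p.2 * phi lam.

Lemma lf_inj : injective lf.
Proof.
case=> c d [c' d'] /= h.
have : kappa (c - c') * lam + kappa (d - d') * phi lam = 0.
  move: h; rewrite /lf /= !rmorphB => h.
  rewrite -(subrr (kappa c' * lam + kappa d' * phi lam)) -{1}h; ring.
case/lin0 => /eqP; rewrite subr_eq0 => /eqP -> /eqP; rewrite subr_eq0 => /eqP -> //.
Qed.

Lemma lf_root p : Ff (lf p) = 0.
Proof.
by rewrite /lf FfD !FfZ Ff_phi Ff_lam phi0 !mulr0 addr0.
Qed.

Lemma Ff_roots z : Ff z = 0 -> exists p, z = lf p.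
Proof.
move=> hz.
pose rs := [seq lf p | p <- enum {: k * k}].
have [zin|zn] := boolP (z \in rs).
  by case/mapP: zin => p _ ->; exists p.
exfalso.
have [e1 e2 e3 e4 e5] := q_facts.
pose Ph : {poly L} := 'X^(q * q) + Aco%:P * 'X^q + Mx%:P * 'X.
have hs : size Ph = (q * q).+1.
  rewrite /Ph -addrA size_polyDl size_polyXn //.
  have s1 : leq (size (Aco%:P * 'X^q)) q.+1.
    by rewrite mul_polyC (leq_trans (size_scale_leq _ _)) // size_polyXn.
  have s2 : leq (size (Mx%:P * 'X)) 2.
    by rewrite mul_polyC (leq_trans (size_scale_leq _ _)) // size_polyX.
  apply: (leq_ltn_trans (size_polyD _ _)); rewrite gtn_max; apply/andP; split.
    by apply: (leq_ltn_trans s1); rewrite ltnS.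
  by apply: (leq_ltn_trans s2); rewrite ltnS; have := q_gt1; nia.
have hr t : root Ph t = (Ff t == 0).
  by rewrite /root /Ph !hornerD !hornerCM !hornerXn hornerX FfE.
have := @max_poly_roots _ Ph (z :: rs).
rewrite -size_poly_gt0 hs /= hr hz eqxx zn /=.
have -> : all (root Ph) rs.
  by apply/allP => t /mapP [p _ ->]; rewrite hr lf_root.
rewrite (map_inj_uniq lf_inj) enum_uniq size_map -cardE card_prod.
by rewrite ltnn => /(_ isT isT isT).
Qed.


Definition Bset := fun z => [\/ const_field kappa z, z = v | z = lam].

Lemma x_in_B : gen_field Bset x.
Proof.
have -> : x = kappa gamma * v - lam ^+ (q - 1).
  by rewrite /v /w -/u mulrC divfK ?kg_neq0 // addrC addKr.
have hB := gen_closed Bset.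
apply: (SsB hB); last by apply: (SsX hB); apply: gen_in; apply: Or33.
apply: (SsM hB); apply: gen_in; [apply: Or31; by exists gamma | exact: Or32].
Qed.

Lemma field_eq z : cyclotomic_ff kappa x M z <-> gen_field Bset z.
Proof.
have hB := gen_closed Bset.
split; apply: gen_sub => t.
- case=> [ht | -> | ht].
  + by apply: gen_in; apply: Or31.
  + exact: x_in_B.
  + move: ht; rewrite /carlitz_torsion act_M => /Ff_roots [[c d] ->].
    rewrite /lf /phi /=.
    have hl : gen_field Bset lam by apply: gen_in; apply: Or33.
    have hc e : gen_field Bset (kappa e) by apply: gen_in; apply: Or31; exists e.
    apply: (SsD hB); first by apply: (SsM hB).
    apply: (SsM hB) => //; apply: (SsD hB); first by apply: (SsX hB).
    by apply: (SsM hB) => //; apply: x_in_B.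
- have hA := gen_closed (fun z => [\/ const_field kappa z, z = x | carlitz_torsion kappa x M z]).
  have hl : gen_field (fun z => [\/ const_field kappa z, z = x | carlitz_torsion kappa x M z]) lam.
    by apply: gen_in; apply: Or33; rewrite /carlitz_torsion act_M Ff_lam.
  case=> [ht | -> | ->] //.
  + by apply: gen_in; apply: Or31.
  + rewrite /v /w /u; apply: (Ssdiv hA).
      by apply: (SsD hA); [apply: (SsX hA) | apply: gen_in; apply: Or32].
    by apply: gen_in; apply: Or31; exists gamma.
Qed.

Definition pp : {poly k} := gamma *: 'X^2 + a *: 'X + (b / gamma)%:P.
Definition DD : {poly k} := 'X^q - 'X.
Local Notation GG := (defining_poly a b gamma).
Local Notation ev := (horner_morph (hv0 v)).
Local Notation EE := (horner_morph (hy0 v lam)).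

Lemma GGE : GG = 'X^(q.-1) * DD%:P + pp%:P. Proof. by []. Qed.

Lemma EG : EE GG = lam ^+ (q.-1) * ev DD + ev pp.
Proof. by rewrite GGE rmorphD rmorphM /= rmorphXn /= !horner_morphX !horner_morphC. Qed.

Lemma rel : u * ev DD + ev pp = 0.
Proof. have := Gvy; rewrite eval2E EG /u -subn1 //. Qed.

Lemma ev_inj r : ev r = 0 -> r = 0.
Proof. move=> h; have [//|/v_trans hr] := eqVneq r 0; have e : ev r = (map_poly kappa r).[v] := erefl; by move: hr; rewrite -e h eqxx. Qed.

Lemma pp_root c : pp.[c] != 0.
Proof.
rewrite /pp !hornerD !hornerZ hornerXn hornerX hornerC.
have -> : gamma * c ^+ 2 + a * c + b / gamma = ((gamma * c) ^+ 2 + a * (gamma * c) + b) / gamma.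
  by field.
by rewrite mulf_neq0 ?invr_eq0 // M_noroot.
Qed.

Lemma size_pp : size pp = 3%N.
Proof.
rewrite /pp -addrA size_polyDl size_scale // size_polyXn //.
apply: (leq_ltn_trans (size_polyD _ _)); rewrite gtn_max.
rewrite (leq_ltn_trans (size_scale_leq _ _)) ?size_polyX //.
by rewrite (leq_ltn_trans (size_polyC_leq1 _)).
Qed.

Lemma pp_irr : irreducible_poly pp.
Proof. by apply: cubic_irreducible; [rewrite size_pp | move=> c; exact: pp_root]. Qed.

Lemma pp_neq0 : pp != 0. Proof. exact: irredp_neq0 pp_irr. Qed.

Lemma pp_cop r : ~~ (pp %| r) -> coprimep pp r.
Proof.
move=> h; have [e|e] := irredp_XsubCP pp_irr (dvdp_gcdl pp r).
  by rewrite coprimep_def size_poly_eq1 e.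
by move: h; rewrite -(eqp_dvdl _ e) dvdp_gcdr.
Qed.

Lemma DD_prod : DD = \prod_(c : k) ('X - c%:P).
Proof. exact: finField_genPoly. Qed.

Lemma pp_copD : coprimep pp DD.
Proof.
rewrite DD_prod; apply: (big_ind (fun r => coprimep pp r)).
- exact: coprimep1.
- by move=> r1 r2 h1 h2; rewrite coprimepMr h1.
- by move=> c _; rewrite coprimep_XsubC pp_root.
Qed.

Lemma DD_neq0 : DD != 0.
Proof.
apply/negP => /eqP h; have := pp_copD; rewrite h coprimep0 -size_poly_eq1 size_pp //.
Qed.

Lemma evpp : ev pp != 0. Proof. by apply/negP => /eqP /ev_inj /eqP; rewrite (negPf pp_neq0). Qed.
Lemma evDD : ev DD != 0. Proof. by apply/negP => /eqP /ev_inj /eqP; rewrite (negPf DD_neq0). Qed.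

Lemma prim_exists : exists z : k, (q.-1).-primitive_root z.
Proof.
pose rs := rem 0 (enum k).
have hu : uniq rs by rewrite rem_uniq // enum_uniq.
have hsz : size rs = q.-1 by rewrite size_rem ?mem_enum // -cardE.
have hall : all (q.-1).-unity_root rs.
  apply/allP => c; rewrite mem_rem_uniq ?enum_uniq // inE => /andP [c0 _].
  rewrite unity_rootE; apply/eqP; apply: (mulfI c0); rewrite -exprS.
  by rewrite prednK ?expf_card ?mulr1 // (ltnW q_gt1).
have n0 : (0 < q.-1)%N by rewrite -subn1 subn_gt0 q_gt1.
have := has_prim_root n0 hall hu; rewrite hsz leqnn => /(_ isT) /hasP [z _ hz].
by exists z.
Qed.

Definition sc (C : {poly k}) (P : {poly {poly k}}) := P \Po (C%:P * 'X).

Lemma scE C P j : (sc C P)`_j = C ^+ j * P`_j.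
Proof. exact: coef_compCX. Qed.

Lemma sc_comp C1 C2 P : sc C1 (sc C2 P) = sc (C1 * C2) P.
Proof. by apply/polyP => j; rewrite !scE exprMn; ring. Qed.

Lemma sc1 P : sc 1 P = P.
Proof. by apply/polyP => j; rewrite scE expr1n mul1r. Qed.

Lemma norm_lemma R : EE R = 0 -> pp %| R`_0.
Proof.
move=> hR; apply: contraT => hn.
have [z hz] := prim_exists.
have [n' hn'] : exists n', q.-1 = n'.+1.
  by exists (q.-1).-1; rewrite prednK // -subn1 subn_gt0 q_gt1.
pose N := \prod_(i < n'.+1) sc ((z ^+ i)%:P) R.
have scM : sc (z%:P) N = N.
  have s1 : sc z%:P 1 = 1 by rewrite /sc -polyC1 comp_polyC.
  rewrite /N (big_morph (sc z%:P) (fun P Q => comp_polyM P Q _) s1).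
  under eq_bigr => i _ do rewrite sc_comp -polyCM -exprS.
  rewrite big_ord_recr big_ord_recl /= mulrC; congr (_ * _).
  by rewrite -hn' (prim_expr_order hz) expr0.
have Nj j : ~~ (q.-1 %| j)%N -> N`_j = 0.
  move=> hj; have := congr1 (fun P : {poly {poly k}} => P`_j) scM; rewrite scE /= => e.
  have : ((z ^+ j)%:P - 1) * N`_j = 0 by rewrite mulrBl (rmorphXn (@polyC _)) e mul1r subrr.
  move/eqP; rewrite mulf_eq0 => /orP [|/eqP //].
  rewrite -polyC1 -polyCB polyC_eq0 subr_eq0 -(prim_order_dvd hz) => h.
  by rewrite h in hj.
have N0 : N`_0 = R`_0 ^+ q.-1.
  rewrite -horner_coef0 /N horner_prod.
  under eq_bigr => i _ do rewrite horner_coef0 scE expr0 mul1r.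
  by rewrite prodr_const card_ord hn'.
have EN : EE N = 0.
  by rewrite /N rmorph_prod big_ord_recl /= expr0 sc1 hR mul0r.
pose S := \poly_(i < size N) N`_(i * q.-1).
have n0 : (0 < q.-1)%N by rewrite hn'.
have NS : N = S \Po 'X^(q.-1).
  apply/polyP => j; rewrite coef_comp_poly_Xn //; case: ifP => hj; last by rewrite Nj ?hj.
  rewrite coef_poly divnK //; case: ltnP => // hle.
  by rewrite nth_default // (leq_trans hle) // leq_div.
have ES : (map_poly ev S).[u] = 0.
  rewrite -EN NS {2}/horner_morph map_comp_poly horner_comp map_polyXn hornerXn.
  by rewrite /u subn1.
pose e := (size S).+1.
pose T := \sum_(i < e) S`_i * (- pp) ^+ i * DD ^+ (e - i).
have evT : ev T = ev DD ^+ e * (map_poly ev S).[u].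
  have hsz : (size (map_poly ev S) <= e)%N.
    by apply: leq_trans (size_poly _ _) _; rewrite leqW.
  rewrite (@horner_coef_wide _ e) // big_distrr /= rmorph_sum; apply: eq_bigr => i _.
  rewrite coef_map /= !rmorphM !rmorphXn rmorphN /=.
  have -> : - ev pp = u * ev DD by apply/esym/eqP; rewrite -addr_eq0 rel.
  have -> : ev DD ^+ e = ev DD ^+ i * ev DD ^+ (e - i) by rewrite -exprD subnKC // ltnW.
  rewrite exprMn; move: (ev S`_i) (ev DD ^+ i) (ev DD ^+ (e - i)) (u ^+ i) => A B C D0.
  by rewrite mulrA -[A * _ * _]mulrA [_ * B]mulrC; ring.
have T0 : T = 0 by apply: ev_inj; rewrite evT ES mulr0.
have hdiv : pp %| S`_0 * DD ^+ e.
  move: T0; rewrite /T big_ord_recl /= expr0 subn0 mulr1 => /eqP.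
  rewrite addr_eq0 => /eqP ->; rewrite dvdpNr.
  apply: (big_ind (fun r => pp %| r)) => //; first exact: dvdp_add.
  move=> i _; apply: dvdp_mulr; apply: dvdp_mull.
  by rewrite exprSr; apply: dvdp_mull; rewrite dvdpNr dvdpp.
have S0 : S`_0 = N`_0.
  rewrite coef_poly mul0n; case: ltnP => // h.
  by rewrite nth_default.
move: hdiv; rewrite S0 N0 => hdiv.
have hc : coprimep pp (R`_0 ^+ q.-1 * DD ^+ e).
  by rewrite coprimepMr; apply/andP; split; apply: coprimep_expr; [exact: pp_cop | exact: pp_copD].
have := coprimep_dvdl hdiv hc; rewrite coprimepp size_pp.
by [].
Qed.

Lemma EG0 : EE GG = 0. Proof. exact: Gvy. Qed.

Lemma low_deg_aux m : forall R : {poly {poly k}}, (size (lead_coef R) < m)%N -> EE R = 0 ->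
  (size R <= q.-1)%N -> R = 0.
Proof.
elim: m => [|m IH] R hm hR hs; first by [].
apply/eqP; apply: contraT => R0.
case: (boolP [exists t : 'I_(size R), ~~ (pp %| R`_t)]) => [/existsP [t0 ht0] | hall].
  have exP : exists t, ~~ (pp %| R`_t) by exists t0.
  have [t Pt tmin] := find_ex_minn exP.
  have tR : (t < size R)%N.
    by rewrite ltnNge; apply/negP => h; move: Pt; rewrite nth_default // dvdp0.
  have tn : (t < q.-1)%N := leq_trans tR hs.
  pose lo' := \poly_(j < t) (R`_j %/ pp).
  pose hi := drop_poly t R.
  have hlo : take_poly t R = pp%:P * lo'.
    apply/polyP => j; rewrite coef_take_poly coefCM coef_poly; case: ifP => hj; last by rewrite mulr0.
    rewrite mulrC divpK //; apply: contraT => hnd; have := tmin j hnd; by rewrite leqNgt hj.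
  pose R2 := DD%:P * 'X^(q.-1 - t) * lo' - hi.
  have hid : pp%:P * R2 = DD%:P * 'X^(q.-1 - t) * R - GG * hi.
    have eX : 'X^(q.-1) = 'X^(q.-1 - t) * 'X^t :> {poly {poly k}} by rewrite -exprD subnK // ltnW.
    by rewrite GGE -[R in DD%:P * _ * R](poly_take_drop t R) hlo -/hi eX /R2 (@ident_aux _ _ _ 'X^t).
  have c0 : R2`_0 = - R`_t.
    rewrite /R2 coefB coef0M coefCM coefXn coef_drop_poly add0n.
    by rewrite eq_sym subn_eq0 leqNgt tn /= mulr0 mul0r sub0r.
  clearbody R2.
  have ER2 : EE R2 = 0.
    have h1 := congr1 EE hid.
    rewrite rmorphM rmorphB /= !rmorphM /= hR mulr0 horner_morphC EG0 mul0r subrr in h1.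
    by move/eqP: h1; rewrite mulf_eq0 (negPf evpp) => /eqP.
  by have := norm_lemma ER2; rewrite c0 dvdpNr => h; rewrite h in Pt.
have hd j : pp %| R`_j.
  case: (ltnP j (size R)) => hj; last by rewrite nth_default // dvdp0.
  by move/existsPn: hall => /(_ (Ordinal hj)); rewrite negbK.
pose R1 := \poly_(j < size R) (R`_j %/ pp).
have eR : R = pp%:P * R1.
  apply/polyP => j; rewrite coefCM coef_poly; case: ltnP => hj; first by rewrite mulrC divpK.
  by rewrite mulr0 nth_default.
have R10 : R1 != 0 by apply: contraNneq R0 => h; rewrite eR h mulr0.
suff : R1 = 0 by move=> h; rewrite h eqxx in R10.
apply: IH.
- move: hm; rewrite eR lead_coefM lead_coefC size_mul ?pp_neq0 ?lead_coef_eq0 // size_pp.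
  by rewrite add3n /= ltnS => /ltnW.
- by move: hR; rewrite eR rmorphM /= horner_morphC => /eqP; rewrite mulf_eq0 (negPf evpp) => /eqP.
- by move: hs; rewrite eR size_Cmul // pp_neq0.
Qed.

Lemma low_deg R : EE R = 0 -> (size R <= q.-1)%N -> R = 0.
Proof. exact: (@low_deg_aux (size (lead_coef R)).+1). Qed.

Lemma single_root c P Q : ('X - c%:P)%:P * P = Q * GG -> exists Q', P = Q' * GG.
Proof.
move=> h.
have hG : map_poly (horner_eval c) GG = (pp.[c])%:P.
  rewrite GGE rmorphD rmorphM /= map_polyXn !map_polyC /= !horner_evalE.
  by rewrite /DD hornerD hornerN hornerXn hornerX expf_card subrr polyC0 mulr0 add0r.
have hQ : map_poly (horner_eval c) Q = 0.
  have := congr1 (map_poly (horner_eval c)) h.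
  rewrite !rmorphM /= map_polyC /= horner_evalE hornerXsubC subrr polyC0 mul0r hG => /esym /eqP.
  by rewrite mulf_eq0 polyC_eq0 (negPf (pp_root c)) orbF => /eqP.
have hQj j : root Q`_j c.
  by have := congr1 (fun P : {poly k} => P`_j) hQ; rewrite coef_map /= coef0 horner_evalE /root => ->.
pose Q' := \poly_(j < size Q) (Q`_j %/ ('X - c%:P)).
have eQ : Q = ('X - c%:P)%:P * Q'.
  apply/polyP => j; rewrite coefCM coef_poly; case: ltnP => hj.
    by rewrite mulrC divpK // dvdp_XsubCl.
  by rewrite mulr0 nth_default.
exists Q'; apply: (@mulfI _ ('X - c%:P)%:P).
  by rewrite polyC_eq0 polyXsubC_eq0.
by rewrite h eQ mulrA.
Qed.

Lemma canc_seq (s : seq k) P Q :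
  (\prod_(c <- s) ('X - c%:P))%:P * P = Q * GG -> exists Q', P = Q' * GG.
Proof.
elim: s P Q => [|c s IH] P Q; first by rewrite big_nil polyC1 mul1r => ->; exists Q.
by rewrite big_cons polyCM -mulrA => /single_root [Q1 h1]; exact: IH h1.
Qed.

Lemma canc_D m P Q : (DD ^+ m)%:P * P = Q * GG -> exists Q', P = Q' * GG.
Proof.
elim: m P Q => [|m IH] P Q; first by rewrite expr0 polyC1 mul1r => ->; exists Q.
rewrite exprS polyCM -mulrA => h.
have h2 : (\prod_(c <- index_enum k) ('X - c%:P))%:P * ((DD ^+ m)%:P * P) = Q * GG.
  by rewrite -h DD_prod.
have [Q1 h1] := canc_seq h2.
exact: IH h1.
Qed.

Lemma GG_size : size GG = q.
Proof.
have n0 : (0 < q.-1)%N by rewrite -subn1 subn_gt0 q_gt1.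
have s1 : size ('X^(q.-1) * DD%:P) = q.
  by rewrite mulrC mul_polyC size_scale ?DD_neq0 // size_polyXn prednK // ltnW // q_gt1.
rewrite GGE size_polyDl s1 //.
by rewrite (leq_ltn_trans (size_polyC_leq1 _)) // q_gt1.
Qed.

Lemma GG_lead : lead_coef GG = DD.
Proof.
rewrite GGE lead_coefDl; last first.
  have n0 : (0 < q.-1)%N by rewrite -subn1 subn_gt0 q_gt1.
  rewrite mulrC mul_polyC size_scale ?DD_neq0 // size_polyXn.
  by rewrite (leq_ltn_trans (size_polyC_leq1 _)).
by rewrite lead_coefM lead_coefXn lead_coefC mul1r.
Qed.

Lemma main_ideal P : EE P = 0 -> exists Q, P = Q * GG.
Proof.
move=> hP.
have G0 : GG != 0 by rewrite -size_poly_gt0 GG_size (ltnW q_gt1).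
have := Pdiv.Idomain.divp_eq P GG.
set m := scalp P GG; set Rm := P %% GG => e.
have hRm : EE Rm = 0.
  have := congr1 EE e; rewrite -mul_polyC !rmorphM /= hP mulr0 rmorphD rmorphM /= EG0 mulr0 add0r.
  by move=> ->.
have Rm0 : Rm = 0.
  apply: low_deg => //.
  have := Pdiv.Idomain.ltn_modp P GG; rewrite G0 GG_size /Rm.
  by case: (q) q_gt1 => // n _ /= h; rewrite -ltnS.
move: e; rewrite Rm0 addr0 GG_lead -mul_polyC; exact: canc_D.
Qed.

Lemma final_lam : exists v0 y0 : L,
    (forall z : L,
       cyclotomic_ff kappa x ('X^2 + a *: 'X + b%:P) z <->
       gen_field (fun w0 => [\/ const_field kappa w0, w0 = v0 | w0 = y0]) z) /\
    (forall P : {poly {poly k}},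
       eval2 kappa v0 y0 P = 0 <->
       exists Q : {poly {poly k}}, P = Q * defining_poly a b gamma).
Proof.
exists v, lam; split; first exact: field_eq.
move=> P; split; first exact: main_ideal.
by case=> Q ->; rewrite eval2E rmorphM /= EG0 mulr0.
Qed.

End Lam.

End Main.

Unset Implicit Arguments.

Theorem proposition3p1 (k : finFieldType) (L : closedFieldType)
  (kappa : {rmorphism k -> L}) (x : L)
  (hx : transcendental_over kappa x)
  (a b : k) (hf : irreducible_poly ('X^2 + a *: 'X + b%:P : {poly k}))
  (gamma : k) (hgamma : gamma != 0) :
  exists v y : L,
    (forall z : L,
       cyclotomic_ff kappa x ('X^2 + a *: 'X + b%:P) z <->
       gen_field (fun w => [\/ const_field kappa w, w = v | w = y]) z) /\
    (forall P : {poly {poly k}},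
       eval2 kappa v y P = 0 <->
       exists Q : {poly {poly k}}, P = Q * defining_poly a b gamma).
Proof.
have [lam [l0 hl]] := exists_lam hx hf hgamma.
exact: (final_lam hx hf hgamma l0 hl).
Qed.
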